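(* In the method U-CS$(\hat x_0,\chi,\lambda_0,\bar\varepsilon)$ described in the context, if at some execution of Step 1 the current stepsize $\lambda$ satisfies \[ \lambda\le\frac{(1-\chi)^2\bar\varepsilon}{4M_f^2+\bar\varepsilon L_f}, \] then the point $x$ computed in Step 1 satisfies the inequality tested in Step 2, i.e. $f(x)-\ell_f(x;\hat x_{k-1})-(1-\chi)\|x-\hat x_{k-1}\|^2/(2\lambda)\le(1-\chi)\bar\varepsilon/2$. Consequently, if $\lambda_0$ is chosen equal to $\frac{(1-\chi)^2\bar\varepsilon}{4M_f^2+\bar\varepsilon L_f}$, then $\lambda$ remains constant throughout the method.
   Context: Setting: $f,h:\mathbb{R}^n\to\mathbb{R}\cup\{+\infty\}$ proper lsc convex with $\mathrm{dom}\, h\subseteq\mathrm{dom}\, f$, $\phi=f+h$, $\phi_*=\inf\phi$ attained. A subgradient oracle $f':\mathrm{dom}\, h\to\mathbb{R}^n$, $f'(x)\in\partial f(x)$, satisfies $\|f'(x)-f'(y)\|\le2M_f+L_f\|x-y\|$ for all $x,y\in\mathrm{dom}\, h$, with $M_f,L_f\ge0$. $\ell_f(u;x):=f(x)+\langle f'(x),u-x\rangle$. U-CS$(\hat x_0,\chi,\lambda_0,\bar\varepsilon)$ with inputs in $\mathrm{dom}\, h\times[0,1)\times\mathbb{R}_{++}\times\mathbb{R}_{++}$: Step 0: $\lambda=\lambda_0$, $k=1$. Step 1: $x=\mathrm{argmin}_u\{\ell_f(u;\hat x_{k-1})+h(u)+\frac1{2\lambda}\|u-\hat x_{k-1}\|^2\}$;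 if $\phi(x)-\phi_*\le\bar\varepsilon$ stop. Step 2: if $f(x)-\ell_f(x;\hat x_{k-1})-(1-\chi)\|x-\hat x_{k-1}\|^2/(2\lambda)\le(1-\chi)\bar\varepsilon/2$ fails, set $\lambda=\lambda/2$ and go to Step 1; else $\lambda_k=\lambda$, $\hat x_k=x$, $k\leftarrow k+1$, go to Step 1. *)

(* Defs.v *)
From HB Require Import structures.
From mathcomp Require Import all_boot all_order all_algebra.
From mathcomp Require Import boolp classical_sets reals constructive_ereal.
Set Implicit Arguments. Unset Strict Implicit. Unset Printing Implicit Defensive.
Import Order.TTheory GRing.Theory Num.Theory.
Local Open Scope ring_scope.
Local Open Scope ereal_scope.

Section Defs.
Variables (R : realType) (n : nat).
Notation V := 'rV[R]_n.

Definition dot (u v : V) : R := (\sum_(i < n) u ord0 i * v ord0 i)%R.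
Definition enorm (u : V) : R := Num.sqrt (dot u u).

Definition dom (f : V -> \bar R) : set V := [set x | f x < +oo].

Definition proper_fun (f : V -> \bar R) : Prop :=
  (forall x, f x != -oo) /\ exists x, f x < +oo.

Definition lsc (f : V -> \bar R) : Prop :=
  forall (x : V) (a : R), a%:E < f x ->
    exists2 d : R, (0 < d)%R & forall y, (enorm (y - x) < d)%R -> a%:E < f y.

Definition convex_fun (f : V -> \bar R) : Prop :=
  forall x y (t : R), x \in dom f -> y \in dom f -> (0 <= t <= 1)%R ->
    f (t *: x + (1 - t) *: y)%R <= t%:E * f x + (1 - t)%:E * f y.

Definition subgrad (f : V -> \bar R) (x g : V) : Prop :=
  forall z, f x + (dot g (z - x))%:E <= f z.

Definition lin (f : V -> \bar R) (f' : V -> V) (u x : V) : \bar R :=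
  f x + (dot (f' x) (u - x))%:E.

Definition prox_obj (f h : V -> \bar R) (f' : V -> V) (y : V) (lam : R) (u : V)
  : \bar R :=
  lin f f' u y + h u + (enorm (u - y) ^+ 2 / (2 * lam))%:E.

Definition is_prox_argmin (f h : V -> \bar R) (f' : V -> V) (y : V) (lam : R)
  (x : V) : Prop :=
  forall u, prox_obj f h f' y lam x <= prox_obj f h f' y lam u.

Definition step2_test (f : V -> \bar R) (f' : V -> V) (chi eps : R) (y : V)
  (lam : R) (x : V) : Prop :=
  f x - lin f f' x y - ((1 - chi) * enorm (x - y) ^+ 2 / (2 * lam))%:E
    <= ((1 - chi) * eps / 2)%:E.

(* Reachable states (hat x_{k-1}, lambda) at the start of an execution of
   Step 1 of U-CS(x0, chi, lam0, eps); phistar = inf phi. *)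
Inductive ucs_reach (f h : V -> \bar R) (f' : V -> V) (phistar : \bar R)
  (x0 : V) (chi lam0 eps : R) : V -> R -> Prop :=
| ucs_init : ucs_reach f h f' phistar x0 chi lam0 eps x0 lam0
| ucs_halve y lam x :
    ucs_reach f h f' phistar x0 chi lam0 eps y lam ->
    is_prox_argmin f h f' y lam x ->
    ~ (f x + h x - phistar <= eps%:E) ->
    ~ step2_test f f' chi eps y lam x ->
    ucs_reach f h f' phistar x0 chi lam0 eps y (lam / 2)
| ucs_accept y lam x :
    ucs_reach f h f' phistar x0 chi lam0 eps y lam ->
    is_prox_argmin f h f' y lam x ->
    ~ (f x + h x - phistar <= eps%:E) ->
    step2_test f f' chi eps y lam x ->
    ucs_reach f h f' phistar x0 chi lam0 eps x lam.

End Defs.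

(* Main.v *)
Require Import Defs.
From HB Require Import structures.
From mathcomp Require Import all_boot all_order all_algebra.
From mathcomp Require Import boolp classical_sets reals constructive_ereal.
From mathcomp Require Import ring lra.
Import Order.TTheory GRing.Theory Num.Theory.
Set Implicit Arguments. Unset Strict Implicit.
Local Open Scope ring_scope.

Section Aux.
Variables (R : realType) (n : nat).
Notation V := 'rV[R]_n.

Lemma dotDl (u v w : V) : dot (u + v) w = dot u w + dot v w.
Proof. rewrite /dot -big_split /=; apply: eq_bigr => i _; rewrite mxE mulrDl //. Qed.

Lemma dotNl (u w : V) : dot (- u) w = - dot u w.
Proof. rewrite /dot -sumrN; apply: eq_bigr => i _; rewrite mxE mulNr //. Qed.

Lemma dotBl (u v w : V) : dot (u - v) w = dot u w - dot v w.
Proof. by rewrite dotDl dotNl. Qed.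

Lemma dotZr (t : R) (u w : V) : dot u (t *: w) = t * dot u w.
Proof. rewrite /dot mulr_sumr; apply: eq_bigr => i _; rewrite mxE; ring. Qed.

Lemma dotZl (t : R) (u w : V) : dot (t *: u) w = t * dot u w.
Proof. rewrite /dot mulr_sumr; apply: eq_bigr => i _; rewrite mxE; ring. Qed.

Lemma dot_ge0 (u : V) : 0 <= dot u u.
Proof. rewrite /dot; apply: sumr_ge0 => i _; rewrite -expr2; exact: sqr_ge0. Qed.

Lemma dot_amgm (s : R) (u v : V) : 2 * s * dot u v <= s ^+ 2 * dot u u + dot v v.
Proof.
rewrite /dot !mulr_sumr -big_split /=.
apply: ler_sum => i _.
set a := u ord0 i; set b := v ord0 i.
have H : 0 <= (s * a - b) ^+ 2 by exact: sqr_ge0.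
nra.
Qed.

Lemma CS (u v : V) : dot u v <= enorm u * enorm v.
Proof.
rewrite /enorm.
have Hu := dot_ge0 u; have Hv := dot_ge0 v.
have AA : Num.sqrt (dot u u) ^+ 2 = dot u u by exact: sqr_sqrtr.
have BB : Num.sqrt (dot v v) ^+ 2 = dot v v by exact: sqr_sqrtr.
move: AA BB.
set A := Num.sqrt (dot u u); set B := Num.sqrt (dot v v).
have A0 : 0 <= A by exact: sqrtr_ge0.
have B0 : 0 <= B by exact: sqrtr_ge0.
have H0 := fun s => dot_amgm s u v.
move: H0 Hu Hv.
set p := dot u v; set a := dot u u; set b := dot v v => H Hu Hv AA BB.
have [Ap|Az] := ltrP 0 A.
- have [Bp|Bz] := ltrP 0 B.
  + have := H (B / A).
    rewrite -AA -BB.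
    have -> : (B / A) ^+ 2 * A ^+ 2 = B ^+ 2 by field; exact: lt0r_neq0.
    rewrite -(ler_pM2l Ap).
    have -> : A * (2 * (B / A) * p) = 2 * B * p by field; exact: lt0r_neq0.
    nra.
  + have B00 : B = 0 by lra.
    rewrite B00 mulr0 leNgt; apply/negP => Hp.
    have a0 : 0 < a by rewrite -AA; exact: exprn_gt0.
    have := H (p / a).
    rewrite -BB B00 expr0n /= addr0.
    have -> : (p / a) ^+ 2 * a = p * p / a by field; exact: lt0r_neq0.
    have -> : 2 * (p / a) * p = 2 * (p * p / a) by field; exact: lt0r_neq0.
    have : 0 < p * p / a by apply: divr_gt0 => //; exact: mulr_gt0.
    lra.
- have A00 : A = 0 by lra.
  rewrite A00 mul0r leNgt; apply/negP => Hp.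
  have := H ((b + 1) / (2 * p)).
  rewrite -AA A00 expr0n /= mulr0 add0r.
  have -> : 2 * ((b + 1) / (2 * p)) * p = b + 1 by field; exact: lt0r_neq0.
  lra.
Qed.

Lemma enormZ (t : R) (u : V) : enorm (t *: u) = `|t| * enorm u.
Proof.
rewrite /enorm dotZl dotZr mulrA -expr2 sqrtrM ?sqr_ge0 // sqrtr_sqr //.
Qed.

Lemma enorm_ge0 (u : V) : 0 <= enorm u.
Proof. exact: sqrtr_ge0. Qed.

Lemma zB (y d : V) (s t : R) : (y + s *: d) - (y + t *: d) = (s - t) *: d.
Proof. by rewrite opprD addrACA subrr add0r scalerBl. Qed.

Lemma seg_bound (P : V -> Prop) (F : V -> R) (g : V -> V) (M L : R) (x y : V)
  (N : nat) :
  (0 < N)%N -> 0 <= M -> 0 <= L ->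
  (forall t, 0 <= t <= 1 -> P (y + t *: (x - y))) ->
  (forall z w, P z -> P w -> F z + dot (g z) (w - z) <= F w) ->
  (forall z w, P z -> P w -> enorm (g z - g w) <= 2 * M + L * enorm (z - w)) ->
  F x - F y - dot (g y) (x - y) <=
    2 * M * enorm (x - y) + L * enorm (x - y) ^+ 2 * (N%:R + 1) / (2 * N%:R).
Proof.
move=> N0 M0 L0 Hseg Hsub Hlip.
set d := x - y; set r := enorm d; set Q := dot (g y) d.
have r0 : 0 <= r := enorm_ge0 d.
have Np : 0 < (N%:R : R) by rewrite ltr0n.
set u := (N%:R : R)^-1.
have u0 : 0 < u by rewrite invr_gt0.
have Nu : N%:R * u = 1 by rewrite mulfV // lt0r_neq0.
pose z (k : nat) := y + (k%:R * u) *: d.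
have Pz : forall k, (k <= N)%N -> P (z k).
  move=> k kN; apply: Hseg; apply/andP; split.
    by apply: mulr_ge0 => //; exact: ltW.
  have : (k%:R : R) <= N%:R by rewrite ler_nat.
  nra.
have Py : P y by have := Pz 0%N isT; rewrite /z mul0r scale0r addr0.
have claim : forall k, (k <= N)%N ->
  F (z k) - F y - k%:R * u * Q <=
  k%:R * u * 2 * M * r + L * r ^+ 2 * k%:R * (k%:R + 1) * u ^+ 2 / 2.
  elim=> [|k IH] kN.
    rewrite /z mul0r scale0r addr0 !mul0r !mulr0 mul0r subrr; lra.
  have kN' : (k <= N)%N by apply: ltnW.
  have IH' := IH kN'.
  have Hs := Hsub _ _ (Pz _ kN) (Pz _ kN').
  rewrite /z zB in Hs.
  have e1 : k%:R * u - k.+1%:R * u = - u by rewrite -natr1; ring.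
  rewrite e1 dotZr in Hs.
  have HL := Hlip _ _ (Pz _ kN) Py.
  have ez : z k.+1 - y = (k.+1%:R * u) *: d.
    by rewrite /z -{2}(addr0 y) -(scale0r d) zB subr0.
  rewrite ez enormZ ger0_norm in HL; last by apply: mulr_ge0 => //; exact: ltW.
  have CSk := CS (g (z k.+1) - g y) d.
  rewrite dotBl in CSk.
  have H1 : dot (g (z k.+1)) d - Q <= (2 * M + L * (k.+1%:R * u * r)) * r.
    apply: (le_trans CSk); apply: ler_wpM2r => //.
  have H2 : u * (dot (g (z k.+1)) d - Q) <= u * ((2 * M + L * (k.+1%:R * u * r)) * r).
    by rewrite ler_pM2l.
  rewrite -natr1.
  rewrite -natr1 in H2.
  nra.
have := claim N (leqnn N).
rewrite /z Nu scale1r !mul1r.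
have -> : y + d = x by rewrite /d addrC subrK.
move=> H.
have -> : L * r ^+ 2 * (N%:R + 1) / (2 * N%:R) = L * r ^+ 2 * N%:R * (N%:R + 1) * u ^+ 2 / 2.
  rewrite /u; field; exact: lt0r_neq0.
lra.
Qed.

Lemma lim_arg (E B K : R) : 0 <= K ->
  (forall N : nat, (0 < N)%N -> E <= B + K * (N%:R + 1) / (2 * N%:R)) ->
  E <= B + K / 2.
Proof.
move=> K0 H; rewrite leNgt; apply/negP => Hlt.
set del := E - (B + K / 2).
have d0 : 0 < del by rewrite /del subr_gt0.
set K' := K / (2 * del).
have K'0 : 0 <= K' by apply: divr_ge0 => //; lra.
have Hb := archi_boundP K'0.
set N := (Num.bound K').+1.
have HN := H N isT.
have Nge : K' < N%:R by apply: (lt_le_trans Hb); rewrite ler_nat.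
have Np : 0 < (N%:R : R) by rewrite ltr0n.
have e : K * (N%:R + 1) / (2 * N%:R) = K / 2 + K / (2 * N%:R).
  by field; exact: lt0r_neq0.
rewrite e in HN.
have : K / (2 * N%:R) < del.
  rewrite ltr_pdivrMr; last by rewrite mulr_gt0.
  move: Nge; rewrite /K' ltr_pdivrMr; last by rewrite mulr_gt0.
  lra.
rewrite /del; lra.
Qed.

Lemma final_arith (E M L r a lam eps : R) :
  0 <= M -> 0 <= L -> 0 <= r -> 0 < a -> a <= 1 -> 0 < lam -> 0 < eps ->
  lam * (4 * M ^+ 2 + eps * L) <= a ^+ 2 * eps ->
  E <= 2 * M * r + L / 2 * r ^+ 2 ->
  E - a * r ^+ 2 / (2 * lam) <= a * eps / 2.
Proof.
move=> M0 L0 r0 a0 a1 l0 e0 Hc HE.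
have e : a * r ^+ 2 / (2 * lam) = (a * r ^+ 2) / 2 / lam by field; exact: lt0r_neq0.
suff : 2 * lam * E - a * r ^+ 2 <= a * eps * lam.
  move=> H; rewrite e.
  have : E - a * r ^+ 2 / 2 / lam = (2 * lam * E - a * r ^+ 2) / (2 * lam).
    by field; exact: lt0r_neq0.
  move=> ->; rewrite ler_pdivrMr; last by rewrite mulr_gt0.
  lra.
have HE' : 2 * lam * E <= 2 * lam * (2 * M * r + L / 2 * r ^+ 2).
  by rewrite ler_pM2l ?mulr_gt0.
set c := a - L * lam.
have HLe : eps * (L * lam) <= eps * a.
  have : lam * (eps * L) <= a ^+ 2 * eps by nra.
  have : a ^+ 2 <= a by nra.
  nra.
have HLe' : L * lam <= a by rewrite ler_pM2l in HLe.
have c0 : 0 <= c.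
  rewrite /c; lra.
have key : 4 * M ^+ 2 * lam <= a * eps * c.
  rewrite /c.
  have p0 : 0 <= eps * L * lam by apply: mulr_ge0; [apply: mulr_ge0|]; lra.
  have : eps * L * lam * a <= eps * L * lam.
    by rewrite -{2}(mulr1 (eps * L * lam)); apply: ler_wpM2l.
  nra.
suff : 0 <= a * eps * lam + c * r ^+ 2 - 4 * M * lam * r.
  move=> H.
  have eq : 2 * lam * (2 * M * r + L / 2 * r ^+ 2) = 4 * M * lam * r + L * lam * r ^+ 2 by field.
  rewrite eq in HE'; rewrite /c in H; lra.
have [cp|cz] := ltrP 0 c.
  rewrite -(pmulr_rge0 _ cp).
  have -> : c * (a * eps * lam + c * r ^+ 2 - 4 * M * lam * r) =
    lam * (a * eps * c - 4 * M ^+ 2 * lam) + (c * r - 2 * M * lam) ^+ 2 by ring.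
  apply: addr_ge0; last exact: sqr_ge0.
  apply: mulr_ge0; lra.
have c00 : c = 0 by lra.
rewrite c00 in key.
have : M ^+ 2 <= 0 by nra.
move=> HM; have M00 : M = 0 by nra.
rewrite M00 c00.
have : 0 < a * eps * lam by rewrite !mulr_gt0.
lra.
Qed.
End Aux.

Unset Implicit Arguments.
Local Open Scope ereal_scope.

Theorem lemma2p1 (R : realType) (n : nat)
  (f h : 'rV[R]_n -> \bar R) (f' : 'rV[R]_n -> 'rV[R]_n) (Mf Lf : R)
  (x0 xs : 'rV[R]_n) (chi lam0 eps : R) :
  proper_fun f -> lsc f -> convex_fun f ->
  proper_fun h -> lsc h -> convex_fun h ->
  (dom h `<=` dom f)%classic ->
  (forall u, f xs + h xs <= f u + h u) ->
  (forall x, x \in dom h -> subgrad f x (f' x)) ->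
  (0 <= Mf)%R -> (0 <= Lf)%R ->
  (forall x y, x \in dom h -> y \in dom h ->
     (enorm (f' x - f' y) <= 2 * Mf + Lf * enorm (x - y))%R) ->
  x0 \in dom h -> (0 <= chi < 1)%R -> (0 < lam0)%R -> (0 < eps)%R ->
  let phistar := f xs + h xs in
  (forall y lam x,
     ucs_reach f h f' phistar x0 chi lam0 eps y lam ->
     (lam * (4 * Mf ^+ 2 + eps * Lf) <= (1 - chi) ^+ 2 * eps)%R ->
     is_prox_argmin f h f' y lam x ->
     step2_test f f' chi eps y lam x)
  /\
  (lam0 = ((1 - chi) ^+ 2 * eps / (4 * Mf ^+ 2 + eps * Lf))%R ->
   forall y lam, ucs_reach f h f' phistar x0 chi lam0 eps y lam -> lam = lam0).
Proof.
move=> [fNoo _] _ _ [hNoo _] _ hconv Hdom _ Hsub M0 L0 Hlip x0D /andP[chi0 chi1] l0 e0 phistar.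
have finf : forall z, z \in dom h -> f z = (fine (f z))%:E.
  move=> z /set_mem zD; rewrite fineK // fin_numE fNoo /= -ltey.
  exact: Hdom.
have finh : forall z, z \in dom h -> h z = (fine (h z))%:E.
  move=> z /set_mem zD; rewrite fineK // fin_numE hNoo /= -ltey.
  exact: zD.
have segD : forall x y (t : R), x \in dom h -> y \in dom h -> (0 <= t <= 1)%R ->
    (y + t *: (x - y))%R \in dom h.
  move=> x y t xD yD t01; apply: mem_set.
  have -> : (y + t *: (x - y) = t *: x + (1 - t) *: y)%R.
    by rewrite scalerBr scalerBl scale1r addrCA.
  apply: (le_lt_trans (hconv x y t xD yD t01)).
  by rewrite (finh x xD) (finh y yD) -!EFinM -EFinD ltry.
have argD : forall y lam x, y \in dom h -> is_prox_argmin f h f' y lam x ->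
    x \in dom h.
  move=> y lam x yD Hm; apply: mem_set; rewrite /dom /= ltey; apply/negP => /eqP Ehx.
  have := Hm y; rewrite /prox_obj /lin Ehx (finf y yD) (finh y yD).
  rewrite -EFinD addey // addye // -!EFinD leye_eq.
have inv : forall y lam, ucs_reach f h f' phistar x0 chi lam0 eps y lam ->
    y \in dom h /\ (0 < lam)%R.
  move=> y lam; elim => [|y' l x' _ [yD lp] _ _ _|y' l x' _ [yD lp] Hm _ _].
  - by split.
  - by split => //; rewrite divr_gt0.
  - by split => //; apply: argD Hm.
have P1 : forall y lam x,
     ucs_reach f h f' phistar x0 chi lam0 eps y lam ->
     (lam * (4 * Mf ^+ 2 + eps * Lf) <= (1 - chi) ^+ 2 * eps)%R ->
     is_prox_argmin f h f' y lam x ->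
     step2_test f f' chi eps y lam x.
  move=> y lam x Hr Hc Hm.
  have [yD lp] := inv _ _ Hr.
  have xD := argD _ _ _ yD Hm.
  rewrite /step2_test /lin (finf x xD) (finf y yD) -EFinD lee_fin.
  have Hseg : forall N : nat, (0 < N)%N ->
    (fine (f x) - fine (f y) - dot (f' y) (x - y) <=
      2 * Mf * enorm (x - y) + Lf * enorm (x - y) ^+ 2 * (N%:R + 1) / (2 * N%:R))%R.
    move=> N N0.
    apply: (@seg_bound R n (fun z => z \in dom h) (fun z => fine (f z)) f' Mf Lf x y N N0 M0 L0).
    - by move=> t t01; apply: segD.
    - move=> z w zD wD; have := Hsub z zD w.
      by rewrite (finf z zD) (finf w wD) -EFinD lee_fin.
    - exact: Hlip.
  have HE := lim_arg (mulr_ge0 L0 (exprn_ge0 2 (enorm_ge0 (x - y)%R))) Hseg.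
  have := @final_arith R (fine (f x) - fine (f y) - dot (f' y) (x - y))%R Mf Lf
     (enorm (x - y)%R) (1 - chi)%R lam eps M0 L0 (enorm_ge0 _).
  move=> /(_ _ _ lp e0 Hc) H.
  have : (fine (f x) - fine (f y) - dot (f' y) (x - y) - (1 - chi) * enorm (x - y) ^+ 2 / (2 * lam) <= (1 - chi) * eps / 2)%R.
    apply: H; [lra|lra|lra].
  lra.
split => // Hl0 y lam.
set D := (4 * Mf ^+ 2 + eps * Lf)%R.
have D0 : (0 < D)%R.
  have : (0 <= D)%R by rewrite /D; apply: addr_ge0; [apply: mulr_ge0 => //; exact: sqr_ge0 | apply: mulr_ge0 => //; lra].
  rewrite le0r => /orP [/eqP D00|//].
  by move: l0; rewrite Hl0 -/D D00 invr0 mulr0 ltxx.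
have HlD : (lam0 * D = (1 - chi) ^+ 2 * eps)%R.
  by rewrite Hl0 -/D mulrVK // unitfE lt0r_neq0.
elim => [|y' l x' Hr IH Hm Hnot Hnt|y' l x' _ IH _ _ _] //.
exfalso; apply: Hnt; apply: (P1 _ _ _ Hr _ Hm).
by rewrite IH -/D HlD.
Qed.
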